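(* Consider the system $\dot{x} = A x + B u$, $y = h(x)$, with $x \in \mathbb{R}^n$, $u \in \mathbb{R}^p$, $y \in \mathbb{R}^m$, where $h:\mathbb{R}^n\to\mathbb{R}^m$ is a (possibly nonlinear) output function and the pair $(A,B)$ is controllable. Let $Q = Q^T \succ 0$ and $R = R^T \succ 0$, and let $P \succ 0$ be the positive definite solution of the algebraic Riccati equation $Q + A^T P + P A - P B R^{-1} B^T P = 0$. Define the feedback $$u(x) = -\left[R^{-1} + S(x)\right] B^T P x,$$ where $S(x)$ is the $p\times p$ diagonal matrix with diagonal entries $$S_{ii}(x) = k_{1_i}\, e^{-\frac{k_{2_i}}{\|x\|}} \sin^2\!\big(k_{3_i}\|x\| + k_{4_i}\big),\qquad k_{1_i} \ge 0,\ \ k_{4_i} \in [0,\tfrac{\pi}{2}),\ \ i = 1,\dots,p.$$ Then this control asymptotically stabilizes the system (i.e., the origin of the closed-loop system is asymptotically stable).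
   Context: $k_{2_i}, k_{3_i}$ are real parameters of the feedback; $\|\cdot\|$ is the Euclidean norm. *)

(* Defs.v *)
From HB Require Import structures.
From mathcomp Require Import all_boot all_order all_algebra.
From mathcomp Require Import all_classical all_reals all_analysis.
Set Implicit Arguments. Unset Strict Implicit. Unset Printing Implicit Defensive.
Import Order.TTheory GRing.Theory Num.Theory.
Import numFieldNormedType.Exports.
Local Open Scope ring_scope.
Local Open Scope classical_set_scope.

Definition enorm {R : realType} {n : nat} (x : 'cV[R]_n) : R :=
  Num.sqrt (\sum_(i < n) x i 0 ^+ 2).

Definition posdef {R : realType} {n : nat} (M : 'M[R]_n) : Prop :=
  M^T = M /\ forall x : 'cV[R]_n, x != 0 -> 0 < (x^T *m M *m x) 0 0.

Definition ctrb_mx {R : realType} {n p : nat} (A : 'M[R]_n) (B : 'M[R]_(n, p)) :=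
  \mxrow_(k < n) (A ^+ k *m B).

Definition controllable {R : realType} {n p : nat} (A : 'M[R]_n) (B : 'M[R]_(n, p)) :
  Prop := \rank (ctrb_mx A B) = n.

(* The gain matrix S(x) = diag(k1_i exp(-k2_i/||x||) sin^2(k3_i ||x|| + k4_i)).
   (At x = 0 the Rocq convention 1/0 = 0 makes S(0) finite; it is irrelevant
    since S(x) multiplies B^T P x.) *)
Definition Sgain {R : realType} {n p : nat} (k1 k2 k3 k4 : 'I_p -> R)
  (x : 'cV[R]_n) : 'M[R]_p :=
  diag_mx (\row_(i < p) (k1 i * expR (- (k2 i / enorm x))
                          * (sin (k3 i * enorm x + k4 i)) ^+ 2)).

Definition feedback {R : realType} {n p : nat} (Rw : 'M[R]_p) (B : 'M[R]_(n, p))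
  (P : 'M[R]_n) (k1 k2 k3 k4 : 'I_p -> R) (x : 'cV[R]_n) : 'cV[R]_p :=
  - ((invmx Rw + Sgain k1 k2 k3 k4 x) *m B^T *m P *m x).

Definition is_solution {R : realType} {n : nat} (f : 'cV[R]_n -> 'cV[R]_n)
  (x : R -> 'cV[R]_n) : Prop :=
  {within `[0, +oo[, continuous x} /\
  forall t : R, 0 < t -> derivable x t 1 /\ 'D_1 x t = f (x t).

Definition asymptotically_stable {R : realType} {n : nat}
  (f : 'cV[R]_n -> 'cV[R]_n) : Prop :=
  f 0 = 0 /\
  (forall eps : R, 0 < eps -> exists2 delta : R, 0 < delta &
     forall x : R -> 'cV[R]_n, is_solution f x -> enorm (x 0) < delta ->
       forall t : R, 0 <= t -> enorm (x t) < eps) /\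
  (exists2 delta : R, 0 < delta &
     forall x : R -> 'cV[R]_n, is_solution f x -> enorm (x 0) < delta ->
       enorm (x t) @[t --> +oo] --> (0 : R)).

(* Main.v *)
Require Import Defs.
From HB Require Import structures.
From mathcomp Require Import all_boot all_order all_algebra.
From mathcomp Require Import all_classical all_reals all_analysis.
From mathcomp Require Import ring lra.
Import Order.TTheory GRing.Theory Num.Theory.
Import numFieldNormedType.Exports.
Local Open Scope ring_scope.
Local Open Scope classical_set_scope.

Definition Gc {R : realType} {n : nat} (M : 'M[R]_n) (x y : 'cV[R]_n) : R :=
  \sum_i \sum_j x i 0 * M i j * y j 0.
Definition Gr {R : realType} {n : nat} (M : 'M[R]_n) (y : 'rV[R]_n) : R :=
  \sum_i \sum_j y 0 i * M i j * y 0 j.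
Definition ssc {R : realType} {n : nat} (x : 'cV[R]_n) : R := \sum_i x i 0 ^+ 2.
Definition ssr {R : realType} {n : nat} (y : 'rV[R]_n) : R := \sum_i y 0 i ^+ 2.

Lemma sum_continuous (T : topologicalType) (R : realType) (I : Type) (s : seq I)
  (f : I -> T -> R) : (forall i, continuous (f i)) ->
  continuous (fun y => \sum_(i <- s) f i y).
Proof.
move=> cf; elim: s => [|a s IH].
  have -> : (fun y : T => \sum_(i <- [::]) f i y) = (fun=> 0).
    by apply: funext => y; rewrite big_nil.
  exact: cst_continuous.
have -> : (fun y : T => \sum_(i <- a :: s) f i y) =
   (f a + (fun y => \sum_(i <- s) f i y)).
  by apply: funext => y; rewrite big_cons.
by move=> y; apply: continuousD; [exact: cf | exact: IH].
Qed.

Lemma Gr_continuous (R : realType) n (M : 'M[R]_n) : continuous (Gr M).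
Proof.
apply: sum_continuous => i; apply: sum_continuous => j.
move=> y; apply: (@continuousM _ _ (fun y : 'rV[R]_n => y 0 i * M i j) (fun y => y 0 j)).
  apply: (@continuousM _ _ (fun y : 'rV[R]_n => y 0 i) (fun y => M i j)).
    exact: coord_continuous.
  exact: cst_continuous.
exact: coord_continuous.
Qed.

Lemma ssr_continuous (R : realType) n : continuous (@ssr R n).
Proof.
apply: sum_continuous => i y.
have -> : (fun y : 'rV[R]_n => y 0 i ^+ 2) = (fun y => y 0 i) \* (fun y => y 0 i).
  by apply: funext => z; rewrite /= expr2.
by apply: continuousM; exact: coord_continuous.
Qed.

Lemma GrZ (R : realType) n (M : 'M[R]_n) a y : Gr M (a *: y) = a ^+ 2 * Gr M y.
Proof.
rewrite /Gr mulr_sumr; apply: eq_bigr => i _; rewrite mulr_sumr.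
apply: eq_bigr => j _; rewrite !mxE; ring.
Qed.

Lemma ssrZ (R : realType) n a (y : 'rV[R]_n) : ssr (a *: y) = a ^+ 2 * ssr y.
Proof.
rewrite /ssr mulr_sumr; apply: eq_bigr => i _; rewrite !mxE; ring.
Qed.

Lemma Gc_tr (R : realType) n (M : 'M[R]_n) x : Gc M x x = Gr M x^T.
Proof. by rewrite /Gc /Gr; apply: eq_bigr => i _; apply: eq_bigr => j _; rewrite !mxE. Qed.

Lemma ssc_tr (R : realType) n (x : 'cV[R]_n) : ssc x = ssr x^T.
Proof. by rewrite /ssc /ssr; apply: eq_bigr => i _; rewrite !mxE. Qed.

Lemma ssc_ge0 (R : realType) n (x : 'cV[R]_n) : 0 <= ssc x.
Proof. by apply: sumr_ge0 => i _; rewrite sqr_ge0. Qed.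

Lemma ssc_eq0 (R : realType) n (x : 'cV[R]_n) : ssc x = 0 -> x = 0.
Proof.
move=> /psumr_eq0P h; apply/matrixP => i j; rewrite !mxE (ord1 j).
by apply/eqP; rewrite -sqrf_eq0 h// => k _; rewrite sqr_ge0.
Qed.

Lemma Gc_mx (R : realType) n (M : 'M[R]_n) x y : Gc M x y = (x^T *m M *m y) 0 0.
Proof.
rewrite /Gc mxE; under [RHS]eq_bigr do rewrite mxE big_distrl /=.
rewrite exchange_big /=; apply: eq_bigr => i _; apply: eq_bigr => j _.
by rewrite !mxE.
Qed.

Lemma qf_bounds (R : realType) n (M : 'M[R]_n) : exists cm cM : R,
  (posdef M -> 0 < cm) /\ forall x, cm * ssc x <= Gc M x x <= cM * ssc x.
Proof.
case: n M => [|n] M.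
  exists 1, 1; split => // x.
  by rewrite /ssc /Gc !big_ord0 mulr0 lexx.
pose S := [set y : 'rV[R]_n.+1 | ssr y = 1].
have S0 : S !=set0.
  exists (\row_j (j == ord0)%:R); rewrite /S /= /ssr (bigD1 ord0) //= big1.
    by rewrite !mxE eqxx expr1n addr0.
  by move=> i /negbTE hi; rewrite !mxE hi expr0n.
have cS : compact S.
  have bS : [bounded y | y in S].
    rewrite /bounded_near; near=> B => y /= Sy; rewrite /Num.Def.normr /= mx_normrE.
    apply: bigmax_le; first by near: B; apply: nbhs_pinfty_ge; exact: num_real.
    move=> [i j] _ /=; rewrite (ord1 i).
    have h : y 0 j ^+ 2 <= 1.
      rewrite -Sy /ssr (bigD1 j) //= lerDl; apply: sumr_ge0 => k _.
      exact: sqr_ge0.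
    have h2 : `|y 0 j| <= 1.
      rewrite leNgt; apply/negP => h3.
      have : 1 < `|y 0 j| ^+ 2 by rewrite expr_gt1 // ltW // (lt_trans ltr01).
      by rewrite real_normK ?num_real // ltNge h.
    apply: (le_trans h2); near: B; apply: nbhs_pinfty_ge; exact: num_real.
  apply: bounded_closed_compact; first exact: bS.
  have -> : S = ssr @^-1` [set 1] by [].
  apply: preimage_closed; last exact: closed_eq.
  by move=> y _; exact: ssr_continuous.
have cG : {within S, continuous (Gr M)}.
  exact/continuous_subspaceT/Gr_continuous.
have [ym ymS ymin] := compact_EVT_min S0 cS cG.
have [yM yMS ymax] := compact_EVT_max S0 cS cG.
exists (Gr M ym), (Gr M yM); split.
  move=> [_ pM]; rewrite inE /S /= in ymS.
  have : ym^T != 0.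
    apply/eqP => h; move: ymS; rewrite -(trmxK ym) h -ssc_tr.
    rewrite /ssc big1 => [/eqP|i _]; first by rewrite eq_sym oner_eq0.
    by rewrite mxE expr0n.
  move=> /pM; rewrite -Gc_mx Gc_tr trmxK //.
move=> x; have [x0|] := eqVneq (ssc x) 0.
  have -> : x = 0 by exact: ssc_eq0.
  rewrite /ssc /Gc !big1 ?mulr0 ?lexx // => i _.
    by rewrite big1 // => j _; rewrite !mxE !mul0r.
  by rewrite mxE expr0n.
move=> xn0; have s0 : 0 < ssc x by rewrite lt0r xn0 ssc_ge0.
set r := Num.sqrt (ssc x).
have r0 : 0 < r by rewrite sqrtr_gt0.
pose y := r^-1 *: x^T.
have xy : x^T = r *: y by rewrite /y scalerA mulfV ?gt_eqF // scale1r.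
have yS : y \in S.
  rewrite inE /S /= /y ssrZ -ssc_tr exprVn sqr_sqrtr ?ssc_ge0 //.
  by rewrite mulVf // gt_eqF.
have -> : Gc M x x = ssc x * Gr M y.
  by rewrite Gc_tr xy GrZ sqr_sqrtr // ssc_ge0.
rewrite ![_ * ssc x]mulrC !ler_pM2l //; apply/andP; split; [exact: ymin|exact: ymax].
Unshelve. all: end_near.
Qed.

Lemma mx11_tr (R : realType) (M : 'M[R]_1) : M^T = M.
Proof. by apply/matrixP => i j; rewrite mxE (ord1 i) (ord1 j). Qed.

Lemma posdef_unit (R : realType) p (M : 'M[R]_p) : posdef M -> M \in unitmx.
Proof.
move=> [_ pM]; rewrite unitmxE unitfE; apply/negP => /det0P [v v0 vM].
have : v^T != 0 by rewrite trmx_eq0.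
move=> /pM; rewrite trmxK vM mul0mx mxE ltxx //.
Qed.

Lemma posdef_ge0 (R : realType) p (M : 'M[R]_p) (x : 'cV[R]_p) : posdef M -> 0 <= (x^T *m M *m x) 0 0.
Proof.
move=> [_ pM]; have [->|/pM/ltW//] := eqVneq x 0.
by rewrite mulmx0 mxE.
Qed.

Lemma lyap (R : realType) (n p : nat)
  (A : 'M[R]_n) (B : 'M[R]_(n, p)) (Q : 'M[R]_n) (Rw : 'M[R]_p) (P : 'M[R]_n)
  (k1 k2 k3 k4 : 'I_p -> R) (x : 'cV[R]_n) :
  posdef Rw -> posdef P ->
  Q + A^T *m P + P *m A - P *m B *m invmx Rw *m B^T *m P = 0 ->
  (forall i, 0 <= k1 i) ->
  2 * (x^T *m P *m (A *m x + B *m feedback Rw B P k1 k2 k3 k4 x)) 0 0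
    <= - (x^T *m Q *m x) 0 0.
Proof.
move=> pRw [PT pP] H k1ge0.
set Ri := invmx Rw; set S := Sgain k1 k2 k3 k4 x.
pose z := B^T *m P *m x.
have zT : x^T *m P *m B = z^T by rewrite /z !trmx_mul trmxK PT mulmxA.
have Ric : A^T *m P + P *m A = P *m B *m Ri *m B^T *m P - Q.
  move/eqP: H; rewrite subr_eq0 => /eqP <-.
  by rewrite -(addrA Q) (addrC Q) addrK.
have Lsym : (x^T *m P *m A *m x) = x^T *m A^T *m P *m x.
  by rewrite -[LHS]mx11_tr !trmx_mul trmxK PT !mulmxA.
have h1 : x^T *m P *m (A *m x + B *m feedback Rw B P k1 k2 k3 k4 x) =
   x^T *m P *m A *m x - z^T *m (Ri + S) *m z.
  rewrite /feedback mulmxDr !mulmxN !mulmxA zT.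
  by [].
have h2 : (x^T *m P *m A *m x) *+ 2 = z^T *m Ri *m z - x^T *m Q *m x.
  have e : x^T *m (A^T *m P + P *m A) *m x =
     x^T *m A^T *m P *m x + x^T *m P *m A *m x.
    by rewrite mulmxDr mulmxDl !mulmxA.
  rewrite mulr2n {1}Lsym -e Ric mulmxBr mulmxBl !mulmxA zT.
  by [].
have E : (x^T *m P *m (A *m x + B *m feedback Rw B P k1 k2 k3 k4 x)) *+ 2 =
   - (x^T *m Q *m x) - (z^T *m Ri *m z) - (z^T *m S *m z) *+ 2.
  rewrite h1 mulrnBl h2 mulmxDr mulmxDl.
  move: (z^T *m Ri *m z) (z^T *m S *m z) (x^T *m Q *m x) => a b c.
  apply/matrixP => i j; rewrite !mxE; ring.
have -> : 2 * (x^T *m P *m (A *m x + B *m feedback Rw B P k1 k2 k3 k4 x)) 0 0 =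
   ((x^T *m P *m (A *m x + B *m feedback Rw B P k1 k2 k3 k4 x)) *+ 2) 0 0.
  by rewrite [in RHS]mxE mulr_natl.
have zRz : 0 <= (z^T *m Ri *m z) 0 0.
  have uR := @posdef_unit _ _ _ pRw.
  pose w := Ri *m z.
  have wz : Rw *m w = z by rewrite /w /Ri mulKVmx.
  rewrite -mulmxA -/w -{1}wz trmx_mul pRw.1.
  exact: posdef_ge0.
have zSz : 0 <= (z^T *m S *m z) 0 0.
  rewrite /S /Sgain mul_mx_diag mxE; apply: sumr_ge0 => j _; rewrite !mxE.
  have : 0 <= k1 j * expR (- (k2 j / enorm x)) * sin (k3 j * enorm x + k4 j) ^+ 2.
    by rewrite mulr_ge0 ?sqr_ge0 // mulr_ge0 ?expR_ge0.
  move=> h; rewrite mulrAC -expr2 mulr_ge0 //.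
  exact: sqr_ge0.
rewrite E; move: zRz zSz.
move: (z^T *m Ri *m z) (z^T *m S *m z) (x^T *m Q *m x) => a b c ha hb.
rewrite !mxE; lra.
Qed.

Lemma comp_is_derive (R : realType) n (X : R -> 'cV[R]_n) t i :
  derivable X t 1 -> is_derive t 1 (fun s => X s i 0) ('D_1 X t i 0).
Proof.
move=> dX; rewrite derive_mx // mxE.
apply: derivableP; exact: (proj1 (derivable_mxP X t 1) dX i 0).
Qed.

Lemma Gc_is_derive (R : realType) n (M : 'M[R]_n) (X : R -> 'cV[R]_n) t :
  M^T = M -> derivable X t 1 ->
  is_derive t 1 (fun s => Gc M (X s) (X s)) (2 * Gc M (X t) ('D_1 X t)).
Proof.
move=> MT dX.
pose D i := 'D_1 X t i 0.
have hij : forall i j, is_derive t 1 (fun s => X s i 0 * M i j * X s j 0)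
    (D i * M i j * X t j 0 + X t i 0 * M i j * D j).
  move=> i j.
  have h1 := is_deriveM (@comp_is_derive _ _ X t i dX) (@is_derive_cst _ _ _ (M i j) t 1).
  have h2 := is_deriveM h1 (@comp_is_derive _ _ X t j dX).
  match type of h2 with is_derive _ _ ?F _ =>
    have -> : (fun s => X s i 0 * M i j * X s j 0) = F by apply: funext end.
  apply: (is_derive_eq h2).
  rewrite /D /= scaler0 add0r.
  have e : forall a b : R, a *: b = a * b by [].
  rewrite !e.
  have -> : ((fun s : R => X s i 0) * cst (M i j)) t = X t i 0 * M i j by [].
  ring.
have hi : forall i, is_derive t 1 (fun s => \sum_j X s i 0 * M i j * X s j 0)
    (\sum_j (D i * M i j * X t j 0 + X t i 0 * M i j * D j)).
  move=> i; have h := is_derive_sum (hij i).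
  match type of h with is_derive _ _ ?F _ =>
    have -> : (fun s => \sum_j X s i 0 * M i j * X s j 0) = F
      by apply: funext => s; rewrite fct_sumE end.
  exact: h.
have h := is_derive_sum hi.
rewrite /Gc.
match type of h with is_derive _ _ ?F _ =>
  have -> : (fun s => \sum_i \sum_j X s i 0 * M i j * X s j 0) = F
    by apply: funext => s; rewrite fct_sumE end.
apply: (is_derive_eq h).
have Msym : forall i j, M j i = M i j.
  by move=> i j; have := congr1 (fun A : 'M[R]_n => A i j) MT; rewrite mxE.
under eq_bigr do rewrite big_split.
rewrite big_split /=.
have -> : \sum_i \sum_j D i * M i j * X t j 0 = \sum_i \sum_j X t i 0 * M i j * D j.
  rewrite exchange_big; apply: eq_bigr => i _; apply: eq_bigr => j _.
  by rewrite (Msym j i); ring.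
rewrite /D; ring.
Qed.

Lemma Gcd_continuous (R : realType) n (M : 'M[R]_n) : continuous (fun x : 'cV[R]_n => Gc M x x).
Proof.
apply: sum_continuous => i; apply: sum_continuous => j.
move=> y; apply: (@continuousM _ _ (fun y : 'cV[R]_n => y i 0 * M i j) (fun y => y j 0)).
  apply: (@continuousM _ _ (fun y : 'cV[R]_n => y i 0) (fun y => M i j)).
    exact: coord_continuous.
  exact: cst_continuous.
exact: coord_continuous.
Qed.

Lemma decay (R : realType) n (f : 'cV[R]_n -> 'cV[R]_n) (P : 'M[R]_n) (c : R) :
  P^T = P -> 0 < c ->
  (forall x, 2 * Gc P x (f x) <= - c * Gc P x x) ->
  forall X, is_solution f X ->
  forall t, 0 <= t -> Gc P (X t) (X t) <= expR (- c * t) * Gc P (X 0) (X 0).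
Proof.
move=> PT c0 hf X [cX dX] t t0.
pose V s := Gc P (X s) (X s).
pose E s := expR (c * s).
pose W s := E s * V s.
have dV : forall s : R, 0 < s -> is_derive s 1 V (2 * Gc P (X s) (f (X s))).
  move=> s s0; have [d1 d2] := dX s s0.
  by rewrite -d2; exact: Gc_is_derive.
have dE : forall s : R, is_derive s 1 E (expR (c * s) * c).
  move=> s.
  have h1 : is_derive s 1 (c \*: (@id R)) (c *: (1 : R)) := is_deriveZ c (is_derive_id s 1).
  have h2 := is_derive1_comp (is_derive_expR (c * s)) h1.
  match type of h2 with is_derive _ _ ?F _ =>
    have -> : E = F by apply: funext => y end.
  apply: (is_derive_eq h2).
  have e : c%:A = c * 1 by [].
  by rewrite e mulr1.
have dW : forall s : R, 0 < s -> is_derive s 1 W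
    (E s * (2 * Gc P (X s) (f (X s))) + V s * (expR (c * s) * c)).
  move=> s s0; have h := is_deriveM (dE s) (dV s s0).
  match type of h with is_derive _ _ ?F _ =>
    have -> : W = F by apply: funext => y end.
  apply: (is_derive_eq h).
  have e : forall a b : R, a *: b = a * b by [].
  by rewrite !e.
have Wle : forall s : R, 0 < s -> W^`()%classic s <= 0.
  move=> s s0; rewrite derive1E (@derive_val _ _ _ _ _ _ _ (dW s s0)).
  have := hf (X s); rewrite -/(V s) /E => h.
  have ep := expR_gt0 (c * s).
  nra.
have cW : {within `[0, +oo[, continuous W}.
  have cV : {within `[0, +oo[, continuous V}.
    move=> s; apply: (@continuous_comp _ _ _ (X : subspace `[0, +oo[ -> 'cV[R]_n)
       (fun x => Gc P x x)); [exact: cX | exact: Gcd_continuous].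
  have cE : {within `[0, +oo[, continuous E}.
    apply: continuous_subspaceT => s.
    have -> : E = expR \o (fun s => s * c) by apply: funext => y; rewrite /E /= mulrC.
    apply: continuous_comp; [exact: mulrr_continuous | exact: continuous_expR].
  move=> s; exact: (@continuousM _ _ (E : subspace `[0, +oo[ -> R) V s (cE s) (cV s)).
have mono : forall x y : R, 0 <= x -> x <= y -> W y <= W x.
  apply: ler0_derive1_nincry => //.
    move=> s; rewrite in_itv /= andbT => s0.
    exact: (@ex_derive _ _ _ _ _ _ _ (dW s s0)).
  by move=> s; rewrite in_itv /= andbT => s0; exact: Wle.
have := mono 0 t (lexx 0) t0; rewrite /W /E mulr0 expR0 mul1r => h.
have -> : Gc P (X t) (X t) = expR (- c * t) * (expR (c * t) * V t).
  by rewrite mulrA mulNr [expR (- _) * _]mulrC expRxMexpNx_1 mul1r.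
by apply: ler_wpM2l; [exact: expR_ge0 | exact: h].
Qed.

Lemma cvg_expRk (R : realType) (k : R) : 0 < k ->
  expR (- (k * x)) @[x --> +oo] --> (0 : R).
Proof.
move=> k0; apply/cvgrPdist_le => e e0; near=> x.
rewrite sub0r normrN ger0_norm; last exact: expR_ge0.
rewrite expRN -[leRHS]invrK lef_pV2 ?posrE ?expR_gt0 ?invr_gt0//.
rewrite (le_trans _ (expR_ge1Dx _))//.
have hx : e^-1 / k <= x by near: x; apply: nbhs_pinfty_ge; exact: num_real.
have : e^-1 <= k * x.
  by rewrite -ler_pdivrMl // mulrC.
have : 0 <= e^-1 by rewrite invr_ge0 ltW.
lra.
Unshelve. all: end_near. Qed.

Lemma enorm_sq (R : realType) n (x : 'cV[R]_n) : enorm x ^+ 2 = ssc x.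
Proof. by rewrite /enorm sqr_sqrtr // ssc_ge0. Qed.

Lemma enorm_ge0 (R : realType) n (x : 'cV[R]_n) : 0 <= enorm x.
Proof. exact: sqrtr_ge0. Qed.

Theorem proposition1 (R : realType) (n p m : nat)
  (A : 'M[R]_n) (B : 'M[R]_(n, p)) (h : 'cV[R]_n -> 'cV[R]_m)
  (Q : 'M[R]_n) (Rw : 'M[R]_p) (P : 'M[R]_n)
  (k1 k2 k3 k4 : 'I_p -> R) :
  controllable A B ->
  posdef Q -> posdef Rw -> posdef P ->
  Q + A^T *m P + P *m A - P *m B *m invmx Rw *m B^T *m P = 0 ->
  (forall i, 0 <= k1 i) ->
  (forall i, 0 <= k4 i /\ k4 i < pi / 2) ->
  asymptotically_stable
    (fun x : 'cV[R]_n => A *m x + B *m feedback Rw B P k1 k2 k3 k4 x).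
Proof.
move=> _ pQ pRw pP Hric hk1 _.
set f := (fun x : 'cV[R]_n => A *m x + B *m feedback Rw B P k1 k2 k3 k4 x).
have PT := pP.1.
have [qm [qM [qpos qb]]] := @qf_bounds _ _ Q; have q0 := qpos pQ.
have [pm [pM [ppos pb]]] := @qf_bounds _ _ P; have p0 := ppos pP.
pose cP := `|pM| + 1.
have cP0 : 0 < cP by rewrite /cP ltr_wpDl.
have pbU : forall x, Gc P x x <= cP * ssc x.
  move=> x; have /andP[_ h1] := pb x; have h2 := @ssc_ge0 _ _ x.
  have h3 : pM <= `|pM| := ler_norm pM.
  rewrite /cP; nra.
pose c := qm / cP.
have c0 : 0 < c by rewrite divr_gt0.
have hf : forall x, 2 * Gc P x (f x) <= - c * Gc P x x.
  move=> x; rewrite Gc_mx.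
  have h1 := @lyap R n p A B Q Rw P k1 k2 k3 k4 x pRw pP Hric hk1.
  have /andP[h2 _] := qb x; rewrite Gc_mx in h2.
  have h3 := pbU x; have h4 := @ssc_ge0 _ _ x.
  have h5 : c * cP = qm by rewrite /c mulfVK // gt_eqF.
  rewrite -/(f x) in h1.
  nra.
have dec := @decay _ _ f P c PT c0 hf.
pose K := cP / pm.
have K0 : 0 < K by rewrite divr_gt0.
have bnd : forall X, is_solution f X -> forall t, 0 <= t ->
    ssc (X t) <= K * expR (- c * t) * ssc (X 0).
  move=> X sX t t0; have h1 := dec X sX t t0.
  have /andP[h2 _] := pb (X t); have h3 := pbU (X 0).
  have h4 := expR_gt0 (- c * t); have h5 := @ssc_ge0 _ _ (X 0).
  have h6 : K * pm = cP by rewrite /K mulfVK // gt_eqF.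
  have h8 : expR (- c * t) * Gc P (X 0) (X 0) <= expR (- c * t) * (cP * ssc (X 0)).
    by rewrite ler_wpM2l // ltW.
  rewrite -h6 in h8.
  rewrite -(ler_pM2l p0); nra.
split.
  by rewrite /f /feedback !mulmx0 oppr0 mulmx0 addr0.
split.
  move=> eps eps0.
  pose d := eps / (1 + K).
  have d0 : 0 < d by rewrite divr_gt0 // addr_gt0.
  have dK : d * (1 + K) = eps by rewrite /d mulfVK // gt_eqF // addr_gt0.
  exists d => // X sX X0 t t0.
  have h1 := bnd X sX t t0.
  have h2 : expR (- c * t) <= 1 by rewrite expR_le1 mulNr oppr_le0 mulr_ge0 // ltW.
  have h3 := @enorm_ge0 _ _ (X 0); have h4 := @enorm_ge0 _ _ (X t).
  rewrite -!enorm_sq in h1.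
  have h5 := expR_gt0 (- c * t).
  have h6 : enorm (X 0) ^+ 2 < d ^+ 2 by rewrite ltr_pXn2r // ?nnegrE // ltW.
  have h7 : K * expR (- c * t) * enorm (X 0) ^+ 2 <= K * enorm (X 0) ^+ 2.
    by rewrite -mulrA ler_pM2l // ler_piMl // sqr_ge0.
  have h8 : K * enorm (X 0) ^+ 2 < K * d ^+ 2 by rewrite ltr_pM2l.
  have h9 : K * d ^+ 2 < eps ^+ 2 by rewrite -dK; nra.
  rewrite -(ltr_pXn2r (n := 2)) ?nnegrE ?(ltW eps0) //.
  lra.
exists (1 : R); first exact: ltr01.
move=> X sX _.
pose M := Num.sqrt (K * ssc (X 0)).
apply: (@squeeze_cvgr _ _ _ _ (cst 0) (fun t => expR (- ((c / 2) * t)) * M)).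
- near=> t.
  have t0 : 0 <= t by near: t; apply: nbhs_pinfty_ge; exact: num_real.
  apply/andP; split; first exact: enorm_ge0.
  have h1 := bnd X sX t t0.
  have hM : M ^+ 2 = K * ssc (X 0) by rewrite sqr_sqrtr // mulr_ge0 ?ssc_ge0 // ltW.
  have he : expR (- c * t) = expR (- ((c / 2) * t)) ^+ 2.
    by rewrite expr2 -expRD; congr expR; field.
  have hM0 : 0 <= M by exact: sqrtr_ge0.
  have hE0 := expR_ge0 (- ((c / 2) * t)).
  rewrite -(ler_pXn2r (n := 2)) ?nnegrE ?mulr_ge0 ?enorm_ge0 //.
  rewrite enorm_sq exprMn hM -he; nra.
- exact: cvg_cst.
- rewrite -(mul0r M); apply: cvgM; last exact: cvg_cst.
  exact: (@cvg_expRk _ _ (divr_gt0 c0 (ltr0Sn _ 1))).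
Unshelve. all: end_near. Qed.
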